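(* Let $(T,f,\sqsubseteq_L)$ be a leaf-ordered merge tree, and for $h\ge0$ let $\le_h$ on $\mathbb{L}_h$ be defined by $x_1\le_h x_2$ iff $x_1=x_2$ or $u_1\sqsubseteq_L u_2$ for all $u_1\in L(T_{x_1})$, $u_2\in L(T_{x_2})$. Then $(\le_h)_{h\ge0}$ is consistent: for all $0\le h_1\le h_2$ and $x_1,x_2\in\mathbb{L}_{h_1}$ with $x_1\le_{h_1}x_2$, we have $\mathrm{anc}_{h_2}(x_1)\le_{h_2}\mathrm{anc}_{h_2}(x_2)$.
   Context: A merge tree $(T,f)$: a finite rooted tree $T$ identified with its topological realisation, with a continuous $f\colon T\to\mathbb{R}\cup\{\infty\}$ strictly increasing towards the root, $f(v)=\infty$ iff $v$ is the root; lowest leaf at height $0$; $L(T)$ is the set of leaves and $L(T_x)$ the leaves in the subtree $T_x$ of descendants of $x$. $\mathrm{lca}$ is the lowest common ancestor; $\mathrm{anc}_h(x)$ is the unique ancestor of $x$ at height $h\ge f(x)$; $\mathbb{L}_h=\{x:f(x)=h\}$. A leaf-order is a total order $\sqsubseteq_L$ on $L(T)$ that separates subtrees: for leaves $u,u_1,u_2$ with $u_1\sqsubseteq_L u\sqsubseteq_L u_2$, $u\in T_{\mathrm{lca}(u_1,u_2)}$. A leaf-ordered merge tree is $(T,f,\sqsubseteq_L)$. *)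

(* Defs.v *)
From HB Require Import structures.
From mathcomp Require Import all_boot all_order all_algebra.
Set Implicit Arguments. Unset Strict Implicit. Unset Printing Implicit Defensive.
Import Order.TTheory GRing.Theory Num.Theory.
Local Open Scope ring_scope.

(* A finite rooted tree given by a parent map (the root is its own parent). *)
Definition vanc (V : finType) (par : V -> V) (w v : V) : Prop :=
  exists k : nat, iter k par v = w.

Definition is_leaf (V : finType) (r : V) (par : V -> V) (v : V) : Prop :=
  v <> r /\ forall w, par w <> v.

Record merge_tree (R : realFieldType) := MergeTree {
  mt_V :> finType;
  mt_root : mt_V;
  mt_par : mt_V -> mt_V;
  (* heights of non-root vertices; the root has height +infinity *)
  mt_f : mt_V -> R;
  mt_par_root : mt_par mt_root = mt_root;
  mt_rooted : forall v, vanc mt_par mt_root v;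
  mt_f_incr : forall v, v <> mt_root -> mt_par v <> mt_root ->
                mt_f v < mt_f (mt_par v);
  mt_lowest_leaf0 :
    (forall v, is_leaf mt_root mt_par v -> 0 <= mt_f v) /\
    (exists v, is_leaf mt_root mt_par v /\ mt_f v = 0)
}.

Section Points.
Variables (R : realFieldType) (T : merge_tree R).

Definition leaf (v : T) : Prop := is_leaf (mt_root T) (@mt_par R T) v.
Definition anc (w v : T) : Prop := vanc (@mt_par R T) w v.

(* A non-root point of the topological realisation: (v, h) is the point at
   height h on the edge from vertex v to its parent (h = f v is v itself). *)
Definition is_point (x : T * R) : Prop :=
  x.1 <> mt_root T /\ mt_f x.1 <= x.2 /\
  (mt_par x.1 = mt_root T \/ x.2 < mt_f (mt_par x.1)).

Definition in_level (h : R) (x : T * R) : Prop := is_point x /\ x.2 = h.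

Definition pdesc (y x : T * R) : Prop := anc x.1 y.1 /\ y.2 <= x.2.

Definition is_anc_at (h : R) (x y : T * R) : Prop :=
  in_level h y /\ pdesc x y.

Definition leaf_below (u : T) (x : T * R) : Prop :=
  leaf u /\ pdesc (u, mt_f u) x.

Definition is_lca (w u1 u2 : T) : Prop :=
  anc w u1 /\ anc w u2 /\ (forall z, anc z u1 -> anc z u2 -> anc z w).

(* leaf-order: total order on L(T) separating subtrees *)
Definition leaf_order (leL : rel T) : Prop :=
  (forall u, leaf u -> leL u u) /\
  (forall u1 u2, leaf u1 -> leaf u2 -> leL u1 u2 -> leL u2 u1 -> u1 = u2) /\
  (forall u1 u2 u3, leaf u1 -> leaf u2 -> leaf u3 ->
     leL u1 u2 -> leL u2 u3 -> leL u1 u3) /\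
  (forall u1 u2, leaf u1 -> leaf u2 -> leL u1 u2 \/ leL u2 u1) /\
  (forall u u1 u2 w, leaf u -> leaf u1 -> leaf u2 ->
     leL u1 u -> leL u u2 -> is_lca w u1 u2 -> anc w u).

Definition le_h (leL : rel T) (h : R) (x1 x2 : T * R) : Prop :=
  x1 = x2 \/
  (forall u1 u2, leaf_below u1 x1 -> leaf_below u2 x2 -> leL u1 u2).
End Points.

(* Main.v *)
Require Import Defs.
From mathcomp Require Import all_boot all_order all_algebra.
From Stdlib Require Import Classical.
Import Order.TTheory GRing.Theory Num.Theory.
Set Implicit Arguments. Unset Strict Implicit.
Local Open Scope ring_scope.

Section L.
Variables (R : realFieldType) (T : merge_tree R).
Local Notation par := (@mt_par R T).
Local Notation root := (mt_root T).
Local Notation f := (@mt_f R T).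

Lemma anc_trans (a b c : T) : anc a b -> anc b c -> anc a c.
Proof. move=> [k Hk] [j Hj]; exists (k + j)%N; by rewrite iterD Hj. Qed.

Lemma iter_root k : iter k par root = root.
Proof. elim: k => //= k ->; exact: mt_par_root. Qed.

Lemma anc_root (a : T) : anc a root -> a = root.
Proof. by move=> [k <-]; rewrite iter_root. Qed.

Lemma f_mono_k k (b : T) : iter k par b <> root -> f b <= f (iter k par b).
Proof.
elim: k b => [|k IH] b /=; first by [].
move=> Hpc.
have Hc : iter k par b <> root by move=> E; apply: Hpc; rewrite E mt_par_root.
apply: le_trans (IH _ Hc) _; apply: ltW; exact: mt_f_incr.
Qed.

Lemma f_mono (a b : T) : anc a b -> a <> root -> f b <= f a.
Proof. by move=> [k <-]; apply: f_mono_k. Qed.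

Lemma anc_chain (a b c : T) : anc a c -> anc b c -> anc a b \/ anc b a.
Proof.
move=> [k Hk] [j Hj]; case: (leqP k j) => H.
- right; exists (j - k)%N; by rewrite -Hk -iterD subnK.
- left; exists (k - j)%N; rewrite -Hj -iterD subnK //; exact: ltnW.
Qed.

Lemma uniq_anc (y1 y2 : T * R) (v : T) :
  is_point y1 -> is_point y2 -> y1.2 = y2.2 -> anc y1.1 v -> anc y2.1 v -> y1 = y2.
Proof.
move: y1 y2 => [a1 b1] [a2 b2] /=.
suff W : forall (a1 a2 : T) (b1 b2 : R), is_point (a1, b1) -> is_point (a2, b2) ->
  b1 = b2 -> anc a2 a1 -> (a1, b1) = (a2, b2).
  move=> P1 P2 Eb A1 A2; case: (anc_chain A1 A2) => A.
  - by symmetry; apply: W.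
  - exact: W.
clear; move=> a1 a2 b1 b2 [/= N1 [F1 Q1]] [/= N2 [F2 Q2]] Eb [k Hk].
case: k Hk => [|k] Hk; first by rewrite -Hk Eb.
exfalso; rewrite iterSr in Hk.
case: Q1 => Q1.
- by apply: N2; rewrite -Hk /= Q1 iter_root.
- have : f (par a1) <= f a2 by rewrite -Hk; apply: f_mono_k; rewrite Hk.
  move=> H; have := lt_le_trans Q1 (le_trans H F2); by rewrite Eb ltxx.
Qed.

Lemma leaf_exists (v : T) : v <> root -> exists u, leaf u /\ anc v u.
Proof.
move=> Hv.
suff W : forall n (v : T), (#|[pred w : T | (f w < f v)%R]| < n)%N -> v <> root ->
   exists u, leaf u /\ anc v u by apply: (W _ v (ltnSn _)).
clear v Hv; elim=> [|n IH] v //= Hn Hv.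
case: (classic (exists w, par w = v)) => [[w Hw]|NE].
- have Hw0 : w <> root by move=> E; apply: Hv; rewrite -Hw E mt_par_root.
  have Hf : f w < f v by rewrite -Hw; apply: mt_f_incr => //; rewrite Hw.
  have [u [Lu Au]] : exists u, leaf u /\ anc w u.
    apply: IH Hw0; rewrite -ltnS; apply: leq_trans _ Hn; rewrite ltnS.
    apply: proper_card; apply/properP; split.
    + apply/subsetP => z; rewrite !inE => Hz; exact: lt_trans Hz Hf.
    + by exists w; rewrite !inE ?ltxx.
  exists u; split => //; apply: anc_trans Au; by exists 1%N.
- exists v; split; last by exists 0%N.
  split => // w E; apply: NE; by exists w.
Qed.

Lemma min_ex (P : nat -> Prop) n : P n -> exists m, P m /\ forall j, P j -> (m <= j)%N.
Proof.
elim: n {-2}n (leqnn n) => [|N IH] n Hn Pn.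
- exists n; split => // j _; by move: Hn; rewrite leqn0 => /eqP ->.
- case: (classic (exists j, (j < n)%N /\ P j)) => [[j [Hj Pj]]|NE].
  + apply: (IH j) => //; rewrite -ltnS; exact: leq_trans Hj Hn.
  + exists n; split => // j Pj; rewrite leqNgt; apply/negP => Hj; apply: NE; by exists j.
Qed.

Lemma lca_exists (u1 u2 : T) : exists w, is_lca w u1 u2.
Proof.
have [K HK] := mt_rooted u1.
have PK : anc (iter K par u1) u2 by rewrite HK; exact: mt_rooted.
have [k [Pk Mk]] := @min_ex (fun k : nat => anc (iter k par u1) u2) K PK.
exists (iter k par u1); split; first by exists k.
split => // z [j Hj] Az.
have Hkj : (k <= j)%N by apply: Mk; rewrite Hj.
exists (j - k)%N; by rewrite -iterD subnK.
Qed.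

Lemma below_trans (u : T) (x y : T * R) : leaf_below u x -> pdesc x y -> leaf_below u y.
Proof.
move=> [Lu [A1 F1]] [A2 F2]; split => //; split; first exact: anc_trans A2 A1.
exact: le_trans F1 F2.
Qed.

Lemma sep_lemma (leL : rel T) (y : T * R) (p q r : T) :
  leaf_order leL -> is_point y -> leaf_below p y -> leaf_below r y -> leaf q ->
  leL p q -> leL q r -> leaf_below q y.
Proof.
move=> [_ [_ [_ [_ sep]]]] [Ny [Fy _]] [Lp [Ap _]] [Lr [Ar _]] Lq Hpq Hqr.
have [w Hw] := lca_exists p r.
have Awq := sep q p r w Lq Lp Lr Hpq Hqr Hw.
have Ayw : anc y.1 w by case: Hw => _ [_ H]; exact: H.
have Ayq := anc_trans Ayw Awq.
split => //; split => //=; exact: le_trans (f_mono Ayq Ny) Fy.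
Qed.

End L.

Theorem lemma6 (R : realFieldType) (T : merge_tree R) (leL : rel T) :
  leaf_order leL ->
  forall (h1 h2 : R) (x1 x2 y1 y2 : T * R),
    0 <= h1 -> h1 <= h2 ->
    in_level h1 x1 -> in_level h1 x2 ->
    le_h leL h1 x1 x2 ->
    is_anc_at h2 x1 y1 -> is_anc_at h2 x2 y2 ->
    le_h leL h2 y1 y2.
Proof.
move=> LO h1 h2 x1 x2 y1 y2 _ _ [Px1 Ex1] [Px2 Ex2] Hle [[Py1 Ey1] D1] [[Py2 Ey2] D2].
case: Hle => [E|H].
  left; subst x2; apply: (uniq_anc (v := x1.1)) => //; first by rewrite Ey1 Ey2.
  - by case: D1.
  - by case: D2.
case: (y1 =P y2) => [E|NE]; first by left.
right => u1 u2 Bu1 Bu2.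
have below_of : forall x : T * R, is_point x -> exists a, leaf_below a x.
  move=> x [Nx [Fx _]]; have [a [La Aa]] := leaf_exists Nx.
  exists a; split => //; split => //=; exact: le_trans (f_mono Aa Nx) Fx.
have [a1 B1] := below_of _ Px1.
have [a2 B2] := below_of _ Px2.
have H12 := H a1 a2 B1 B2.
have B1' := below_trans B1 D1.
have B2' := below_trans B2 D2.
have disj : forall u, leaf_below u y1 -> leaf_below u y2 -> False.
  move=> u [_ [A1 _]] [_ [A2 _]]; apply: NE; apply: (uniq_anc (v := u)) => //.
  by rewrite Ey1 Ey2.
have LOc := LO; case: LOc => [_ [_ [_ [total _]]]].
have Lu1 : leaf u1 by case: Bu1.
have Lu2 : leaf u2 by case: Bu2.
have La1 : leaf a1 by case: B1.
have La2 : leaf a2 by case: B2.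
case: (total u1 u2 Lu1 Lu2) => // H21; exfalso.
case: (total a1 u2 La1 Lu2) => Ha.
- apply: (disj u2) => //; exact: (sep_lemma LO Py1 B1' Bu1 Lu2 Ha H21).
- apply: (disj a1) => //; exact: (sep_lemma LO Py2 Bu2 B2' La1 Ha H12).
Qed.
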